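(* Assume the standing hypotheses in the context. Consider, in a front tracking solution, a family of parallel contact discontinuities $\sigma_\alpha$, $\alpha=1,\dots,N$, of a linearly degenerate family $i$, and a single front $\sigma$ of a family $k\neq i$ which interacts with all of them. Let $\xi_\alpha$, $\xi$ be their shift rates before the interactions and $\xi_\alpha'$, $\xi'$ after, and assume $\xi_\alpha=\bar\xi$ for all $\alpha$. Let $\bar\Lambda$, $\Lambda$ be the speeds of the $\sigma_\alpha$ and of $\sigma$ before interaction and $\bar\Lambda'$, $\Lambda'$ their speeds after interaction. Then after the interactions all $\xi_\alpha'$ have the same value $\bar\xi'$ and $$\xi_\alpha'=\bar\xi'=\frac{\bar\xi(\bar\Lambda'-\Lambda)-\xi(\bar\Lambda'-\bar\Lambda)}{\Lambda-\bar\Lambda},\qquad \xi'=\frac{\bar\xi(\Lambda'-\Lambda)-\xi(\bar\Lambda'-\bar\Lambda)}{\Lambda-\bar\Lambda}.$$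
   Context: Setting: $u_t+f(u)_x=0$ with $f:\Omega\to\mathbb{R}^n$ smooth, $\Omega\subseteq\mathbb{R}^n$ open, eigenvalues $\lambda_1<\dots<\lambda_n$ of $Df$ with right eigenvectors $r_i$. Standing assumptions: (H1) each field genuinely nonlinear ($r_i\bullet\lambda_i\neq0$) or linearly degenerate ($r_i\bullet\lambda_i\equiv0$); (H2) rarefaction curves form Riemann coordinates $w=(w_1,\dots,w_n)$; (H3) shock and rarefaction curves coincide; $E=\{u\in\Omega:w_i(u)\in[a_i,b_i]\}$ compact and uniformly strictly hyperbolic. Front tracking solution with parameter $\nu$: piecewise constant solution with values in $E^\nu=\{u\in E:w_i(u)\in2^{-\nu}\mathbb{Z}\}$ obtained by solving Riemann problems $[u^-,u^+]$ (split along $\omega_i=(w_1(u^+),\dots,w_i(u^+),w_{i+1}(u^-),\dots,w_n(u^-))$) with contact discontinuities of speed $\lambda_i$ for linearly degenerate fields, shocks with Rankine–Hugoniot speed, and rarefaction fronts with $w_i$-jump $2^{-\nu}$, and tracking interactions. Shift rates: if the initial jumps at $y_\alpha$ are moved to $y_\alpha+\theta\xi_\alpha$, each front at $x_\beta(t)$ of the original solution moves to $x_\beta(t)+\theta\xi_\beta(t)+o(\theta)$ in the perturbed front tracking solution; $\xi_\beta$ is the shift rate of that front. *)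

(* Defs.v *)
From Stdlib Require Import Reals.
Open Scope R_scope.

Definition littleo0 (e : R -> R) : Prop :=
  forall eps, 0 < eps -> exists delta, 0 < delta /\
    forall th, Rabs th < delta -> Rabs (e th) <= eps * Rabs th.

(** A family of fronts [pos th t] (position at time t of the front in the
    solution with perturbation parameter th; th = 0 is the original solution)
    has shift rate [xi] if pos th t = pos 0 t + th * xi + o(th). *)
Definition has_shift_rate (pos : R -> R -> R) (xi : R) : Prop :=
  forall t, littleo0 (fun th => pos th t - pos 0 t - th * xi).

(** Geometry of the interactions.
    - contacts sigma_a (a = 1..N) of speed [Lb] (= bar Lambda) before
      interaction, lying on the lines x = B a + Lb * t;
    - the front sigma lies initially on x = Y + Lam 0 * t and, after having
      crossed sigma_1, ..., sigma_a, moves with speed [Lam a]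
      (Lam 0 = Lambda, Lam N = Lambda');
    - after its interaction, sigma_a moves with speed [Lb'] (= bar Lambda').
    The front sigma after a crossings lies on x = sig_off a + Lam a * t. *)

Definition cross_time (c s b Lb : R) : R := (c - b) / (Lb - s).

Fixpoint sig_off (Lb : R) (Lam : nat -> R) (Y : R) (B : nat -> R) (a : nat) : R :=
  match a with
  | O => Y
  | S a' =>
      let t := cross_time (sig_off Lb Lam Y B a') (Lam a') (B (S a')) Lb in
      B (S a') + Lb * t - Lam (S a') * t
  end.

Definition int_time (Lb : R) (Lam : nat -> R) (Y : R) (B : nat -> R) (a : nat) : R :=
  cross_time (sig_off Lb Lam Y B (Nat.pred a)) (Lam (Nat.pred a)) (B a) Lb.

Definition int_pos (Lb : R) (Lam : nat -> R) (Y : R) (B : nat -> R) (a : nat) : R :=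
  B a + Lb * int_time Lb Lam Y B a.

Definition out_pos (Lb Lb' : R) (Lam : nat -> R) (Y : R) (B : nat -> R)
  (a : nat) (t : R) : R :=
  int_pos Lb Lam Y B a + Lb' * (t - int_time Lb Lam Y B a).

Definition sig_out_pos (Lb : R) (Lam : nat -> R) (Y : R) (B : nat -> R)
  (N : nat) (t : R) : R :=
  sig_off Lb Lam Y B N + Lam N * t.

(* Main.v *)
Require Import Defs.
From Stdlib Require Import Reals Lra Lia.
Open Scope R_scope.

Lemma lo_ext (f g : R -> R) : (forall th, f th = g th) -> littleo0 g -> littleo0 f.
Proof.
  intros H Hg eps He. destruct (Hg eps He) as [d [Hd Hd']].
  exists d; split; auto. intros th Ht. rewrite H. auto.
Qed.

Lemma lo_plus (f g : R -> R) : littleo0 f -> littleo0 g ->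
  littleo0 (fun th => f th + g th).
Proof.
  intros Hf Hg eps He.
  destruct (Hf (eps/2)) as [d1 [Hd1 H1]]; [lra|].
  destruct (Hg (eps/2)) as [d2 [Hd2 H2]]; [lra|].
  exists (Rmin d1 d2); split; [apply Rmin_glb_lt; auto|].
  intros th Ht.
  assert (A1 := H1 th (Rlt_le_trans _ _ _ Ht (Rmin_l _ _))).
  assert (A2 := H2 th (Rlt_le_trans _ _ _ Ht (Rmin_r _ _))).
  eapply Rle_trans; [apply Rabs_triang|]. lra.
Qed.

Lemma lo_scal (c : R) (f : R -> R) : littleo0 f -> littleo0 (fun th => c * f th).
Proof.
  intros Hf eps He.
  assert (Hc : 0 < Rabs c + 1) by (pose proof (Rabs_pos c); lra).
  destruct (Hf (eps / (Rabs c + 1))) as [d [Hd H1]].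
  { apply Rdiv_lt_0_compat; lra. }
  exists d; split; auto. intros th Ht.
  rewrite Rabs_mult. specialize (H1 th Ht).
  apply Rle_trans with (Rabs c * (eps / (Rabs c + 1) * Rabs th)).
  { apply Rmult_le_compat_l; auto. apply Rabs_pos. }
  assert (Rabs c * (eps / (Rabs c + 1)) <= eps).
  { apply Rle_trans with ((Rabs c + 1) * (eps / (Rabs c + 1))).
    - apply Rmult_le_compat_r; [|lra]. left; apply Rdiv_lt_0_compat; lra.
    - right; field; lra. }
  rewrite <- Rmult_assoc. apply Rmult_le_compat_r; auto. apply Rabs_pos.
Qed.

Lemma lo_comb (c : R) (f eB eS : R -> R) :
  (forall th, f th = eB th + c * (eS th - eB th)) ->
  littleo0 eB -> littleo0 eS -> littleo0 f.
Proof.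
  intros H HB HS. eapply lo_ext; [exact H|].
  apply lo_plus; auto. apply lo_scal.
  eapply lo_ext; [|apply lo_plus; [exact HS| apply (lo_scal (-1)); exact HB]].
  intros th; simpl; ring.
Qed.

Definition eta (Lb : R) (Lam : nat -> R) (xib xi : R) (a : nat) : R :=
  (xib * (Lam a - Lam 0%nat) - xi * (Lam a - Lb)) / (Lb - Lam 0%nat).

Lemma sig_off_rate (N : nat) (Lb : R) (Lam : nat -> R)
  (Y : R -> R) (B : R -> nat -> R) (xib xi : R) :
  (1 <= N)%nat ->
  (forall a, (a < N)%nat -> Lam a <> Lb) ->
  (forall a, (1 <= a)%nat -> (a <= N)%nat ->
     has_shift_rate (fun th t => B th a + Lb * t) xib) ->
  has_shift_rate (fun th t => Y th + Lam 0%nat * t) xi ->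
  forall a, (a <= N)%nat ->
  littleo0 (fun th => sig_off Lb Lam (Y th) (B th) a - sig_off Lb Lam (Y 0) (B 0) a
                      - th * eta Lb Lam xib xi a).
Proof.
  intros HN HL HB HY.
  assert (H0 : Lb - Lam 0%nat <> 0) by (specialize (HL 0%nat ltac:(lia)); lra).
  induction a as [|a IH]; intros Ha.
  - eapply lo_ext; [|exact (HY 0)].
    intros th; simpl. unfold eta. field. auto.
  - assert (Ha' : Lb - Lam a <> 0) by (specialize (HL a ltac:(lia)); lra).
    apply (lo_comb ((Lb - Lam (S a)) / (Lb - Lam a)) _
      (fun th => B th (S a) - B 0 (S a) - th * xib)
      (fun th => sig_off Lb Lam (Y th) (B th) a - sig_off Lb Lam (Y 0) (B 0) a
                      - th * eta Lb Lam xib xi a)).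
    + intros th. simpl. unfold cross_time, eta. field. split; auto.
    + eapply lo_ext; [|exact (HB (S a) ltac:(lia) Ha 0)]. intros th; simpl; ring.
    + apply IH; lia.
Qed.

Theorem lemma3p3
  (N : nat) (Lb Lb' : R) (Lam : nat -> R)
  (Y : R -> R) (B : R -> nat -> R) (xib xi : R) :
  (1 <= N)%nat ->
  (* sigma crosses each contact transversally *)
  (forall a, (a < N)%nat -> Lam a <> Lb) ->
  (* in the original solution sigma meets sigma_1, ..., sigma_N in this order *)
  (forall a, (1 <= a)%nat -> (a < N)%nat ->
     int_time Lb Lam (Y 0) (B 0) a < int_time Lb Lam (Y 0) (B 0) (S a)) ->
  (* incoming shift rates: all contacts have shift rate xib, sigma has xi *)
  (forall a, (1 <= a)%nat -> (a <= N)%nat ->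
     has_shift_rate (fun th t => B th a + Lb * t) xib) ->
  has_shift_rate (fun th t => Y th + Lam 0%nat * t) xi ->
  (* outgoing shift rates *)
  (forall a, (1 <= a)%nat -> (a <= N)%nat ->
     has_shift_rate (fun th t => out_pos Lb Lb' Lam (Y th) (B th) a t)
       ((xib * (Lb' - Lam 0%nat) - xi * (Lb' - Lb)) / (Lb - Lam 0%nat))) /\
  has_shift_rate (fun th t => sig_out_pos Lb Lam (Y th) (B th) N t)
    ((xib * (Lam N - Lam 0%nat) - xi * (Lam N - Lb)) / (Lb - Lam 0%nat)).
Proof.
  intros HN HL _ HB HY.
  assert (H0 : Lb - Lam 0%nat <> 0) by (specialize (HL 0%nat ltac:(lia)); lra).
  pose proof (sig_off_rate N Lb Lam Y B xib xi HN HL HB HY) as HS.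
  split.
  - intros a Ha1 HaN t. destruct a as [|a]; [lia|].
    assert (Ha' : Lb - Lam a <> 0) by (specialize (HL a ltac:(lia)); lra).
    apply (lo_comb ((Lb - Lb') / (Lb - Lam a)) _
      (fun th => B th (S a) - B 0 (S a) - th * xib)
      (fun th => sig_off Lb Lam (Y th) (B th) a - sig_off Lb Lam (Y 0) (B 0) a
                      - th * eta Lb Lam xib xi a)).
    + intros th. unfold out_pos, int_pos, int_time, cross_time, eta. simpl.
      field. split; auto.
    + eapply lo_ext; [|exact (HB (S a) ltac:(lia) HaN 0)]. intros th; simpl; ring.
    + apply HS; lia.
  - intros t. eapply lo_ext; [|exact (HS N (le_n N))].
    intros th. unfold sig_out_pos, eta. ring.
Qed.
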